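(* Let $q$ be a power of an odd prime $p$, $e\ge 2$, $r$ a positive integer, $a\in\mathbb{F}_{q^e}$ with $a\neq 0$, $f(x)=x^r(x^{q-1}+a)$, and $\ell=q^{e-1}+\cdots+q+1$. If $r\bmod\ell=hq+1$ for an integer $h$ with $p\nmid h$, then $f(x)$ does not permute $\mathbb{F}_{q^e}$.
   Context: $r\bmod\ell$ denotes the least nonnegative residue of $r$ modulo $\ell$. *)

(* Defs.v *)
From mathcomp Require Import all_boot all_algebra all_field.
Set Implicit Arguments. Unset Strict Implicit. Unset Printing Implicit Defensive.
Import GRing.Theory.
Local Open Scope ring_scope.

Definition fpoly_map (F : fieldType) (q r : nat) (a : F) (x : F) : F :=
  x ^+ r * (x ^+ q.-1 + a).

Definition ell (q e : nat) : nat := (\sum_(i < e) q ^ i)%N.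

(* Main.v *)
Require Import Defs.
From mathcomp Require Import all_boot all_algebra all_field.
From mathcomp Require Import cyclic zify ring.
Set Implicit Arguments. Unset Strict Implicit. Unset Printing Implicit Defensive.
Import GRing.Theory.

Lemma cnt1 J n M : \sum_(0 <= K < n) (J + K == M : nat) = ((J <= M) && (M - J < n)).
Proof.
elim: n => [|n IH]; first by rewrite big_geq // ltn0 andbF.
rewrite big_nat_recr //= IH.
case: (leqP J M) => h /=; last by rewrite (_ : (J + n == M) = false) //; apply/negbTE; lia.
case: (ltnP (M - J) n) => h1; case: (eqVneq (J + n) M) => h2 /=; try lia.
Qed.

Lemma cnt2 lo hi n : \sum_(0 <= J < n) ((lo <= J) && (J < hi) : nat) = minn n hi - lo.
Proof.
elim: n => [|n IH]; first by rewrite big_geq // min0n.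
rewrite big_nat_recr //= IH.
case: (leqP lo n) => h /=; case: (ltnP n hi) => h1 /=; lia.
Qed.

Lemma cnt N M : \sum_(0 <= J < N.+1) \sum_(0 <= K < N.+1) (J + K == M : nat) = minn N.+1 M.+1 - (M - N).
Proof.
rewrite -cnt2; apply: eq_bigr => J _; rewrite cnt1.
by congr nat_of_bool; apply/andP/andP => -[h1 h2]; split; lia.
Qed.

Lemma divcond (r d l l' h q M : nat) : l = q * l' + 1 -> r = d * l + (h * q + 1) -> (3 <= q) ->
  (M <= 2 * ((q - 1) * l')) -> (h < l') ->
  (l %| 2 * r * l' + M) = (M == (q - 2) * l' + 2 * h + 1).
Proof.
move=> hl hr hq hM hh.
have l0 : 0 < l by lia.
have E0 : 2 * r * l' + 2 * h = (2 * d * l' + 2 * h) * l + 2 * l'.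
  rewrite hr hl; lia.
have ql : (q - 1) * l' + l' = q * l'.
  have -> : q = (q - 1) + 1 by lia.
  rewrite mulnDl mul1n; lia.
have q2 : (q - 2) * l' + 2 * l' = q * l'.
  have -> : q = (q - 2) + 2 by lia.
  rewrite mulnDl; lia.
set B := 2 * l' + M - 2 * h.
have E : 2 * r * l' + M = (2 * d * l' + 2 * h) * l + B.
  rewrite /B; lia.
rewrite E dvdn_addr ?dvdn_mull //.
have hB1 : B < 2 * l by rewrite /B; lia.
have hB0 : 0 < B by rewrite /B; lia.
apply/idP/eqP.
  case/dvdnP => c hc.
  have c1 : c = 1.
    have : c * l < 2 * l by rewrite -hc.
    rewrite ltn_pmul2r // => c2.
    have : 0 < c * l by rewrite -hc.
    rewrite muln_gt0 => /andP [c0 _]; lia.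
  move: hc; rewrite c1 mul1n /B; lia.
move=> hM0; apply/dvdnP; exists 1; rewrite /B hM0 mul1n; lia.
Qed.
Section Helpers. Local Open Scope ring_scope.
Lemma unit_pow (F : finFieldType) (x : F) : x != 0 -> x ^+ #|F|.-1 = 1.
Proof.
move=> nx; apply: (mulfI nx); rewrite mulr1 -exprS prednK ?expf_card //.
exact: (ltn_trans _ (finNzRing_gt1 F)).
Qed.

Lemma sum_pow (F : finFieldType) m : (#|F|%:R = 0 :> F) -> (0 < m)%N ->
  \sum_(x : F) x ^+ m = if (#|F|.-1 %| m)%N then -1 else 0.
Proof.
move=> hc hm.
case: ifP => hd.
  rewrite (bigD1 0) //= expr0n gtn_eqF // add0r.
  rewrite (eq_bigr (fun _ => 1)); last first.
    move=> x nx; case/dvdnP: hd => c ->; by rewrite mulnC exprM unit_pow // expr1n.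
  rewrite sumr_const cardC1.
  apply/eqP; rewrite -addr_eq0 natr1 prednK ?hc //.
  exact: (ltn_trans _ (finNzRing_gt1 F)).
have hn : (0 < #|F|.-1)%N by rewrite -ltnS prednK ?finNzRing_gt1 //; exact: (ltn_trans _ (finNzRing_gt1 F)).
have : has (#|F|.-1).-primitive_root (enum [pred x : F | x != 0]).
  apply: has_prim_root => //.
  - apply/allP => x; rewrite mem_enum inE => nx; by rewrite unity_rootE unit_pow.
  - exact: enum_uniq.
  - by rewrite -cardE cardC1.
case/hasP => w; rewrite mem_enum inE => nw wp.
have hw : w ^+ m != 1 by rewrite -(prim_order_dvd wp) hd.
have : \sum_(x : F) x ^+ m = w ^+ m * \sum_(x : F) x ^+ m.
  rewrite [LHS](reindex_inj (mulfI nw)) /= mulr_sumr; apply: eq_bigr => x _; by rewrite exprMn.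
move/eqP; rewrite -subr_eq0 -{1}(mul1r (\sum_x _)) -mulrBl mulf_eq0 subr_eq0.
case/orP => [/eqP e|/eqP //]; by rewrite -e eqxx in hw.
Qed.
Lemma tele (F : comRingType) (X a : F) n :
  (X + a) * \sum_(0 <= J < n.+1) ((-1) ^+ J * X ^+ J * a ^+ (n - J)) = (-1) ^+ n * X ^+ n.+1 + a ^+ n.+1.
Proof.
elim: n => [|n IH].
  by rewrite big_nat1 subnn !expr0 !expr1 !mul1r mulr1.
rewrite big_nat_recr // subnn expr0 mulr1.
rewrite (eq_big_nat _ _ (F2 := fun J => a * ((-1) ^+ J * X ^+ J * a ^+ (n - J)))); last first.
  move=> i /andP [_ hi]; rewrite subSn // exprS.
  by rewrite mulrA [a * _]mulrC -!mulrA [a * _]mulrC.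
rewrite -mulr_sumr mulrDr mulrA [(X + a) * a]mulrC -mulrA IH.
rewrite [(-1) ^+ n.+1]exprS [X ^+ n.+2]exprS [a ^+ n.+2]exprS.
rewrite !mulrDr !mulrDl !mulN1r ?mulrN ?mulNr !mulrA.
ring.
Qed.

Lemma alt_binom (F : fieldType) p j (X a : F) : p \in [pchar F] -> odd p -> (0 < j)%N ->
 (X + a) ^+ (p ^ j).-1 = \sum_(0 <= J < (p ^ j).-1.+1) ((-1) ^+ J * X ^+ J * a ^+ ((p ^ j).-1 - J)).
Proof.
move=> hp op hj.
have pp := pcharf_prime hp.
have hP : (1 < p ^ j)%N by rewrite -(expn0 p) ltn_exp2l ?prime_gt1.
set N := (p ^ j).-1.
have NS : N.+1 = (p ^ j)%N by rewrite /N prednK // ltnW.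
have Nev : ~~ odd N by move: (oddX p j); rewrite -NS oddS op orbT => ->.
have P : (X + a) ^+ N.+1 = X ^+ N.+1 + a ^+ N.+1.
  rewrite NS exprDn_pchar // (eq_pnat _ (pcharf_eq hp)) pnatX pnat_id //; by rewrite orbT.
have hN0 : (N.+1%:R : F) = 0 by apply/eqP; rewrite -(dvdn_pcharf hp) NS dvdn_exp.
case: (eqVneq (X + a) 0) => hXa.
  have -> : X = - a by apply/eqP; rewrite -addr_eq0 hXa.
  rewrite addNr expr0n (_ : N == 0%N = false); last by apply/negbTE; rewrite -lt0n /N -ltnS NS.
  rewrite mulr0n.
  rewrite (eq_big_nat _ _ (F2 := fun _ => a ^+ N)); last first.
    move=> i /andP [_ hi]; rewrite (exprNn a) mulrA -expr2 -exprM mulnC exprM sqrrN !expr1n mul1r -exprD subnKC // -ltnS.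
  by rewrite sumr_const_nat subn0 -mulr_natr hN0 mulr0.
apply: (mulfI hXa); rewrite -exprS P tele.
by rewrite -signr_odd (negbTE Nev) expr0 mul1r.
Qed.
Lemma expand (F : fieldType) p j r m (x a : F) : p \in [pchar F] -> odd p -> (0 < j)%N ->
 (x ^+ r * (x ^+ m + a)) ^+ ((p ^ j).-1 * 2) =
  \sum_(0 <= J < (p ^ j).-1.+1) \sum_(0 <= K < (p ^ j).-1.+1)
   (((-1) ^+ J * a ^+ ((p ^ j).-1 - J)) * ((-1) ^+ K * a ^+ ((p ^ j).-1 - K))) *
     x ^+ (r * ((p ^ j).-1 * 2) + m * (J + K)).
Proof.
move=> hp op hj.
set N := (p ^ j).-1.
have AB := alt_binom (x ^+ m) a hp op hj; rewrite -/N in AB.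
rewrite exprMn [X in (_ + a) ^+ X](_ : (N * 2 = N + N)%N); last by rewrite muln2 addnn.
rewrite exprD AB mulr_suml mulr_sumr; apply: eq_bigr => J _.
rewrite mulr_sumr mulr_sumr; apply: eq_bigr => K _.
rewrite exprD mulnDr exprD !exprM.
ring.
Qed.
End Helpers.

Lemma ell_succ q n : ell q n.+1 = (q * ell q n + 1)%N.
Proof.
rewrite /ell big_ord_recl expn0 big_distrr addnC; congr (_ + _)%N.
by apply: eq_bigr => i _; rewrite lift0 expnS.
Qed.

Lemma aux_lt (q l' : nat) : (3 <= q)%N -> (q * l' + 1 <= l' * 2)%N -> False.
Proof. move=> h1 h2; have : (3 * l' <= q * l')%N by rewrite leq_mul2r h1 orbT. lia. Qed.

Lemma aux_sub N J K : (J <= N)%N -> (K <= N)%N -> (N - J + (N - K) = N * 2 - (J + K))%N.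
Proof. lia. Qed.
Lemma aux_min N M : (M <= N)%N -> (minn N.+1 M.+1 - (M - N) = M.+1)%N.
Proof. lia. Qed.
Lemma aux_id1 (q2 l'' h : nat) :
  ((q2 + 2 - 2) * ((q2 + 2) * l'' + 1) + 2 * h + 1).+1 = ((q2 + 2) * (q2 * l'' + 1) + 2 * h)%N.
Proof. rewrite addnK; lia. Qed.
Lemma aux2 (A l' h : nat) : (h < l')%N -> (A + l' < A + 2 * h + 1)%N ->
  (minn (A + l').+1 (A + 2 * h + 1).+1 - (A + 2 * h + 1 - (A + l')) + 2 * h = A + 2 * l')%N.
Proof. lia. Qed.

Section Main.
Local Open Scope ring_scope.

Lemma main_aux (F : finFieldType) (p k e r h : nat) (a : F) :
  prime p -> odd p -> (0 < k)%N -> (2 <= e)%N -> (0 < r)%N ->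
  #|F| = ((p ^ k) ^ e)%N -> a != 0 ->
  (r %% ell (p ^ k) e)%N = (h * p ^ k + 1)%N -> ~~ (p %| h)%N ->
  injective (fpoly_map (p ^ k) r a) -> False.
Proof.
move=> pp op k0 e2 r0 hF a0 hr hh inj.
have hp : p \in [pchar F].
  by apply: (card_finPcharP (n := (k * e)%N)) => //; rewrite hF expnM.
have hF0 : (#|F|%:R : F) = 0.
  by apply/eqP; rewrite -(dvdn_pcharf hp) hF -expnM dvdn_exp // muln_gt0 k0; lia.
have p3 : (3 <= p)%N.
  have : p != 2%N by apply/eqP => e0; rewrite e0 in op.
  have := prime_gt1 pp; lia.
set q := (p ^ k)%N in hF hr inj *.
have q3 : (3 <= q)%N.
  have : (p ^ 1 <= p ^ k)%N by rewrite leq_pexp2l // prime_gt0.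
  rewrite expn1 /q; lia.
have qp : (p %| q)%N by rewrite /q dvdn_exp.
set e1 := e.-1.
have ee : e = e1.+1 by rewrite /e1; lia.
have [e2' ee1] : exists e2', e1 = e2'.+1 by exists e1.-1; rewrite /e1; lia.
set l' := ell q e1.
set l := ell q e.
have hl : l = (q * l' + 1)%N by rewrite /l ee ell_succ.
have [l'' hl'] : exists l'', l' = (q * l'' + 1)%N by exists (ell q e2'); rewrite /l' ee1 ell_succ.
set N := (q ^ e1).-1.
have hN : N = (q.-1 * l')%N by rewrite /N predn_exp.
have hQ : (#|F|).-1 = (q.-1 * l)%N by rewrite hF /l ee predn_exp.
have hNp : N = (p ^ (k * e1)).-1 by rewrite /N /q expnM.
have l0 : (0 < l)%N by rewrite hl; lia.
have hlt : (h < l')%N.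
  have := ltn_pmod r l0; rewrite hr hl => h1.
  have : (q * h < q * l')%N by rewrite mulnC; lia.
  by rewrite ltn_pmul2l //; lia.
set t := (N * 2)%N.
set M0 := ((q - 2) * l' + 2 * h + 1)%N.
have [q2 hq2] : exists q2, q = (q2 + 2)%N by exists (q - 2)%N; lia.
have Hdiv : forall J K, (J <= N)%N -> (K <= N)%N ->
    (#|F|.-1 %| r * t + q.-1 * (J + K))%N = (J + K == M0)%N.
  move=> J K hJ hK.
  rewrite hQ /t hN.
  have -> : (r * (q.-1 * l' * 2) + q.-1 * (J + K) = q.-1 * (2 * r * l' + (J + K)))%N.
    rewrite hq2 /=; lia.
  rewrite dvdn_pmul2l; last by lia.
  apply: (divcond (d := (r %/ l)%N) (q := q)) => //.
  - by rewrite {1}(divn_eq r l) /l hr.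
  - move: hJ hK; rewrite hN hq2 /=; lia.
have t0 : (0 < t)%N by rewrite /t hN hl' !muln_gt0 addn1 /= andbT; lia.
have S0 : \sum_(x : F) fpoly_map q r a x ^+ t = 0.
  rewrite -(reindex_inj (F := fun y : F => y ^+ t) (P := xpredT) inj) sum_pow //.
  rewrite hQ /t hN -mulnA dvdn_pmul2l; last by lia.
  case: ifP => // hd; exfalso.
  have : (l <= l' * 2)%N by apply: (dvdn_leq _ hd); rewrite hl'; lia.
  by rewrite hl; apply: aux_lt.
have hx : forall x : F, fpoly_map q r a x ^+ t =
    \sum_(0 <= J < N.+1) \sum_(0 <= K < N.+1)
       (((-1) ^+ J * a ^+ (N - J)) * ((-1) ^+ K * a ^+ (N - K))) * x ^+ (r * t + q.-1 * (J + K)).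
  move=> x; have := expand r q.-1 x a hp op (j := (k * e1)%N) (ltac:(rewrite muln_gt0 k0 ee1)).
  rewrite -hNp => H; exact: H.
have S1 : \sum_(x : F) fpoly_map q r a x ^+ t =
    \sum_(0 <= J < N.+1) \sum_(0 <= K < N.+1)
       (((-1) ^+ J * a ^+ (N - J)) * ((-1) ^+ K * a ^+ (N - K))) *
         \sum_(x : F) x ^+ (r * t + q.-1 * (J + K)).
  rewrite (eq_bigr _ (fun x _ => hx x)) exchange_big; apply: eq_bigr => J _.
  rewrite exchange_big; apply: eq_bigr => K _; by rewrite mulr_sumr.
set c := (\sum_(0 <= J < N.+1) \sum_(0 <= K < N.+1) (J + K == M0 : nat))%N.
set w := ((-1) ^+ M0 * a ^+ (N * 2 - M0) : F).
have S2 : \sum_(x : F) fpoly_map q r a x ^+ t = - (w * c%:R).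
  rewrite S1 /c natr_sum mulr_sumr -sumrN; apply: eq_big_nat => J /andP [_ hJ].
  rewrite natr_sum mulr_sumr -sumrN; apply: eq_big_nat => K /andP [_ hK].
  have rt0 : (0 < r * t + q.-1 * (J + K))%N by rewrite addn_gt0 muln_gt0 r0 t0.
  rewrite sum_pow // Hdiv; try by rewrite -ltnS.
  case: eqP => [hM|_]; last by rewrite mulr0 mulr0 oppr0.
  rewrite mulrACA -!exprD hM (_ : (N - J + (N - K) = N * 2 - M0)%N); last first.
    by rewrite -hM aux_sub // -ltnS.
  by rewrite mulrN1 mulr1.
have hw : w != 0 by rewrite mulf_neq0 ?signr_eq0 // expf_neq0.
have hc : (p %| c)%N.
  rewrite (dvdn_pcharf hp); move/eqP: S0; rewrite S2 oppr_eq0.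
  by rewrite mulf_eq0 (negbTE hw).
have hc' : c = (minn N.+1 M0.+1 - (M0 - N))%N by rewrite /c cnt.
have key : (p %| 2 * h)%N.
  case: (leqP M0 N) => hMN.
    have E : c = (q * (q2 * l'' + 1) + 2 * h)%N.
      rewrite hc' aux_min // /M0 hl' hq2; exact: aux_id1.
    by move: hc; rewrite E dvdn_addr // dvdn_mulr.
  have E : (c + 2 * h = q * l')%N.
    move: hMN; rewrite hc' hN /M0 hq2 addnK (_ : (q2 + 2).-1 = q2 + 1)%N; last by rewrite addn2 addn1.
    rewrite mulnDl mul1n (mulnDl q2 2 l').
    exact: aux2 hlt.
  by rewrite -(dvdn_addr _ hc) E dvdn_mulr.
move: key; rewrite Gauss_dvdr ?(negbTE hh) // prime_coprime //.
by apply/negP => /(dvdn_leq (isT : (0 < 2)%N)); lia.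
Qed.

End Main.

Theorem proposition4p3 (F : finFieldType) (p k e r h : nat) (a : F) :
  prime p -> odd p -> (0 < k)%N -> (2 <= e)%N -> (0 < r)%N ->
  #|F| = ((p ^ k) ^ e)%N ->
  a != 0%R ->
  (r %% ell (p ^ k) e)%N = (h * p ^ k + 1)%N ->
  ~~ (p %| h)%N ->
  ~ injective (fpoly_map (p ^ k) r a).
Proof.
move=> pp op k0 e2 r0 hF a0 hr hh inj.
exact: (main_aux pp op k0 e2 r0 hF a0 hr hh inj).
Qed.
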